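(* Let $n\in\mathbb N$, $\varepsilon,h,d>0$, $q\in(0,1)$. Let $\bar u\in(q,1)$ be a root of $g(u):=u(1-u)(u+q)-\varepsilon hq(u-q)$, and set $S:=(q,\bar u)^2\subset\mathbb R^2$. Let $u_0,v_0\in BUC(\mathbb R^n)$ with $(u_0(x),v_0(x))\in S$ for all $x\in\mathbb R^n$, and let $(u,v)$ be the time-global non-negative classical solution of (BZ) with these initial data. Then $(u(x,t),v(x,t))\in S$ for all $x\in\mathbb R^n$ and all $t>0$.
   Context: $BUC(\mathbb R^n)$ denotes the bounded uniformly continuous functions on $\mathbb R^n$ with the sup norm. (BZ) is the system $\partial_t u=\Delta u+\frac1\varepsilon u(1-u)-hv\frac{u-q}{u+q}$, $\partial_t v=d\Delta v-v+u$ in $\mathbb R^n\times(0,\infty)$, $u|_{t=0}=u_0$, $v|_{t=0}=v_0$. For non-negative $u_0,v_0\in BUC$ there is a unique global non-negative classical solution $(u,v)\in C([0,\infty);BUC(\mathbb R^n))^2$ ($C^1$ in $t$, $C^2$ in $x$ for $t>0$). *)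

(* Defs.v *)
From Stdlib Require Import Reals.
From Stdlib Require Fin.
Open Scope R_scope.

Definition pt (n : nat) : Type := Fin.t n -> R.

Definition upd {n : nat} (x : pt n) (i : Fin.t n) (s : R) : pt n :=
  fun j => if Fin.eq_dec j i then s else x j.

Fixpoint sumFin (n : nat) : (Fin.t n -> R) -> R :=
  match n with
  | O => fun _ => 0
  | S m => fun f => f Fin.F1 + sumFin m (fun i => f (Fin.FS i))
  end.

Definition close {n : nat} (x y : pt n) (delta : R) : Prop :=
  forall i, Rabs (x i - y i) < delta.

Definition BUC {n : nat} (f : pt n -> R) : Prop :=
  (exists M, forall x, Rabs (f x) <= M) /\
  (forall eps, eps > 0 -> exists delta, delta > 0 /\
     forall x y, close x y delta -> Rabs (f x - f y) < eps).

Definition C_BUC {n : nat} (u : pt n -> R -> R) : Prop :=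
  (forall t, 0 <= t -> BUC (fun x => u x t)) /\
  (forall t0, 0 <= t0 -> forall eps, eps > 0 -> exists delta, delta > 0 /\
     forall t, 0 <= t -> Rabs (t - t0) < delta ->
       forall x, Rabs (u x t - u x t0) <= eps).

Definition cont_pos {n : nat} (f : pt n -> R -> R) : Prop :=
  forall x t, 0 < t -> forall eps, eps > 0 -> exists delta, delta > 0 /\
    forall y s, 0 < s -> close y x delta -> Rabs (s - t) < delta ->
      Rabs (f y s - f x t) < eps.

Definition classical {n : nat} (u ut lap : pt n -> R -> R) : Prop :=
  cont_pos u /\ cont_pos ut /\
  (forall x t, 0 < t -> derivable_pt_lim (fun s => u x s) t (ut x t)) /\
  exists (D1 D2 : Fin.t n -> pt n -> R -> R),
    (forall i, cont_pos (D1 i) /\ cont_pos (D2 i)) /\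
    (forall i x t, 0 < t ->
       derivable_pt_lim (fun s => u (upd x i s) t) (x i) (D1 i x t)) /\
    (forall i x t, 0 < t ->
       derivable_pt_lim (fun s => D1 i (upd x i s) t) (x i) (D2 i x t)) /\
    (forall x t, 0 < t -> lap x t = sumFin n (fun i => D2 i x t)).

Definition BZ_solution (n : nat) (eps h d q : R) (u0 v0 : pt n -> R)
    (u v : pt n -> R -> R) : Prop :=
  C_BUC u /\ C_BUC v /\
  (forall x, u x 0 = u0 x) /\ (forall x, v x 0 = v0 x) /\
  (forall x t, 0 <= t -> 0 <= u x t /\ 0 <= v x t) /\
  exists ut vt lapu lapv : pt n -> R -> R,
    classical u ut lapu /\ classical v vt lapv /\
    (forall x t, 0 < t ->
       ut x t = lapu x t + / eps * u x t * (1 - u x t)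
                - h * v x t * (u x t - q) / (u x t + q)) /\
    (forall x t, 0 < t ->
       vt x t = d * lapv x t - v x t + u x t).

Definition g_BZ (eps h q u : R) : R := u * (1 - u) * (u + q) - eps * h * q * (u - q).

(* Main.v *)
Require Import Defs.
From Stdlib Require Import Reals.
From Stdlib Require Fin.
From Stdlib Require Import Lra Lia Psatz FunctionalExtensionality ClassicalEpsilon Classical.
Open Scope R_scope.


Lemma sumFin_ext n (f g : Fin.t n -> R) : (forall i, f i = g i) -> sumFin n f = sumFin n g.
Proof. revert f g; induction n; intros f g H; simpl; auto. rewrite H, (IHn _ (fun i => g (Fin.FS i))); auto. Qed.

Lemma sumFin_plus n (f g : Fin.t n -> R) : sumFin n (fun i => f i + g i) = sumFin n f + sumFin n g.
Proof. revert f g; induction n; intros f g; simpl. lra. rewrite (IHn (fun i => f (Fin.FS i)) (fun i => g (Fin.FS i))). lra. Qed.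

Lemma sumFin_scal n (f : Fin.t n -> R) c : sumFin n (fun i => c * f i) = c * sumFin n f.
Proof. revert f; induction n; intros f; simpl. lra. rewrite (IHn (fun i => f (Fin.FS i))). lra. Qed.

Lemma sumFin_const n c : sumFin n (fun _ => c) = INR n * c.
Proof. induction n. simpl; lra. rewrite S_INR. simpl sumFin. rewrite IHn. lra. Qed.

Lemma sumFin_le n (f g : Fin.t n -> R) : (forall i, f i <= g i) -> sumFin n f <= sumFin n g.
Proof. revert f g; induction n; intros f g H; simpl. lra. specialize (IHn (fun i => f (Fin.FS i)) (fun i => g (Fin.FS i))). assert (forall i, f (Fin.FS i) <= g (Fin.FS i)) by (intro; apply H). specialize (H Fin.F1). specialize (IHn H0). lra. Qed.

Lemma sumFin_nonneg n (f : Fin.t n -> R) : (forall i, 0 <= f i) -> 0 <= sumFin n f.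
Proof. intro H. replace 0 with (sumFin n (fun _ => 0)). apply sumFin_le; auto. rewrite sumFin_const; lra. Qed.

Lemma sumFin_ge_term n (f : Fin.t n -> R) i : (forall j, 0 <= f j) -> f i <= sumFin n f.
Proof. revert f i; induction n; intros f i H. inversion i.
 simpl. pattern i; apply Fin.caseS'.
 - assert (0 <= sumFin n (fun i0 => f (Fin.FS i0))) by (apply sumFin_nonneg; auto). lra.
 - intro p. specialize (IHn (fun i => f (Fin.FS i)) p). simpl in IHn. assert (0 <= f Fin.F1) by auto. assert (f (Fin.FS p) <= sumFin n (fun i0 => f (Fin.FS i0))) by (apply IHn; auto). lra. Qed.

Lemma sumFin_upd n (f : Fin.t n -> R) i a :
  sumFin n (fun j => if Fin.eq_dec j i then a else f j) = sumFin n f - f i + a.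
Proof. revert f i; induction n; intros f i. inversion i.
 pattern i; apply Fin.caseS'; simpl.
 - destruct (Fin.eq_dec Fin.F1 Fin.F1) as [_|E]; [lra|congruence].
 - intro p.
   rewrite (sumFin_ext _ _ (fun j => if Fin.eq_dec j p then a else f (Fin.FS j))).
   rewrite (IHn (fun j => f (Fin.FS j)) p). lra.
   intro j. destruct (Fin.eq_dec (Fin.FS j) (Fin.FS p)) as [E|E]; destruct (Fin.eq_dec j p) as [E'|E']; auto.
   apply Fin.FS_inj in E; congruence. subst; congruence.
Qed.

Definition N2 {n} (x : pt n) : R := sumFin n (fun i => x i * x i).

Lemma N2_nonneg n (x : pt n) : 0 <= N2 x.
Proof. apply sumFin_nonneg; intro; nra. Qed.

Lemma N2_ge n (x : pt n) i : x i * x i <= N2 x.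
Proof. apply (sumFin_ge_term n (fun i => x i * x i)); intro; nra. Qed.

Lemma upd_same n (x : pt n) i s : upd x i s i = s.
Proof. unfold upd. destruct (Fin.eq_dec i i); congruence. Qed.

Lemma upd_upd n (x : pt n) i s s' : upd (upd x i s) i s' = upd x i s'.
Proof. apply functional_extensionality; intro j. unfold upd. destruct (Fin.eq_dec j i); auto. Qed.

Lemma upd_id n (x : pt n) i : upd x i (x i) = x.
Proof. apply functional_extensionality; intro j. unfold upd. destruct (Fin.eq_dec j i); subst; auto. Qed.

Lemma upd_other n (x : pt n) i j s : j <> i -> upd x i s j = x j.
Proof. intro H. unfold upd. destruct (Fin.eq_dec j i); congruence. Qed.

Lemma N2_upd n (x : pt n) i s : N2 (upd x i s) = N2 x - x i * x i + s * s.
Proof. unfold N2. rewrite <- (sumFin_upd n (fun j => x j * x j) i (s*s)).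
 apply sumFin_ext. intro j. unfold upd. destruct (Fin.eq_dec j i); auto. Qed.

Definition inbox {n} (R0 : R) (x : pt n) := forall i, Rabs (x i) <= R0.
Definition pcons {n} (s : R) (x : pt n) : pt (S n) := fun j => Fin.caseS' j (fun _ => R) s x.
Definition ptl {n} (x : pt (S n)) : pt n := fun i => x (Fin.FS i).

Lemma pcons_eta n (x : pt (S n)) : pcons (x Fin.F1) (ptl x) = x.
Proof. apply functional_extensionality; intro j; pattern j; apply Fin.caseS'; reflexivity. Qed.

Definition clamp (R0 c : R) := Rmax (- R0) (Rmin R0 c).

Lemma clamp_lip R0 a b : 0 <= R0 -> Rabs (clamp R0 a - clamp R0 b) <= Rabs (a - b).
Proof. intro. unfold clamp, Rmax, Rmin; repeat destruct Rle_dec; unfold Rabs; repeat destruct Rcase_abs; lra. Qed.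
Lemma clamp_range R0 a : 0 <= R0 -> - R0 <= clamp R0 a <= R0.
Proof. intro. unfold clamp, Rmax, Rmin; repeat destruct Rle_dec; lra. Qed.
Lemma clamp_id R0 a : - R0 <= a <= R0 -> clamp R0 a = a.
Proof. intro. unfold clamp, Rmax, Rmin; repeat destruct Rle_dec; lra. Qed.

Lemma inbox_pcons n R0 s (x : pt n) : Rabs s <= R0 -> inbox R0 x -> inbox R0 (pcons s x).
Proof. intros Hs Hx j; pattern j; apply Fin.caseS'; simpl; auto. Qed.

Lemma close_pcons n (x y : pt n) a b dl : Rabs (a - b) < dl -> close x y dl -> close (pcons a x) (pcons b y) dl.
Proof. intros Hs Hx j; pattern j; apply Fin.caseS'; simpl; auto. Qed.

Lemma close_refl n (x : pt n) dl : dl > 0 -> close x x dl.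
Proof. intros H i. rewrite Rminus_diag, Rabs_R0; lra. Qed.

Lemma Rabs_le_iff a b : Rabs a <= b <-> - b <= a <= b.
Proof. unfold Rabs; destruct Rcase_abs; split; intros; lra. Qed.

Lemma evt_box n (R0 : R) (F : pt n -> R) : 0 <= R0 ->
  (forall e, e > 0 -> exists dl, dl > 0 /\ forall x y, inbox R0 x -> inbox R0 y ->
      close x y dl -> Rabs (F x - F y) < e) ->
  exists xs, inbox R0 xs /\ forall y, inbox R0 y -> F xs <= F y.
Proof.
  revert F; induction n; intros F HR HF.
  - exists (fun _ => 0). split. intro i; inversion i.
    intros y _. replace y with (fun _ : Fin.t 0 => 0). lra.
    apply functional_extensionality; intro i; inversion i.
  - set (H := fun (x' : pt n) s => F (pcons (clamp R0 s) x')).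
    assert (Hex : forall x', inbox R0 x' -> exists s, - R0 <= s <= R0 /\
               forall c, - R0 <= c <= R0 -> H x' s <= H x' c).
    { intros x' Hx'. destruct (continuity_ab_min (H x') (-R0) R0) as [s [Hs1 Hs2]]. lra.
      - intros c _. unfold continuity_pt, continue_in, limit1_in, limit_in. simpl. unfold R_dist.
        intros e He. destruct (HF e He) as [dl [Hdl Hdl2]]. exists dl. split; auto.
        intros y [[_ _] Hy]. apply Hdl2.
        + apply inbox_pcons; auto. apply Rabs_le_iff. apply clamp_range; auto.
        + apply inbox_pcons; auto. apply Rabs_le_iff. apply clamp_range; auto.
        + apply close_pcons. eapply Rle_lt_trans. apply clamp_lip; auto. auto.
          apply close_refl; auto.
      - exists s. split; auto. }
    set (sel := fun x' => epsilon (inhabits 0) (fun s => - R0 <= s <= R0 /\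
               forall c, - R0 <= c <= R0 -> H x' s <= H x' c)).
    assert (Hsel : forall x', inbox R0 x' -> - R0 <= sel x' <= R0 /\
               forall c, - R0 <= c <= R0 -> H x' (sel x') <= H x' c).
    { intros x' Hx'. unfold sel. apply epsilon_spec. auto. }
    set (G := fun x' => H x' (sel x')).
    destruct (IHn G) as [xs' [Hxs'1 Hxs'2]]; auto.
    + intros e He. destruct (HF e He) as [dl [Hdl Hdl2]]. exists dl. split; auto.
      intros x y Hx Hy Hxy.
      destruct (Hsel x Hx) as [Hx1 Hx2]. destruct (Hsel y Hy) as [Hy1 Hy2].
      assert (A1 : G x <= H x (sel y)) by (apply Hx2; auto).
      assert (A2 : G y <= H y (sel x)) by (apply Hy2; auto).
      assert (B1 : Rabs (H x (sel y) - G y) < e).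
      { unfold G, H. apply Hdl2. apply inbox_pcons; auto. apply Rabs_le_iff, clamp_range; auto.
        apply inbox_pcons; auto. apply Rabs_le_iff, clamp_range; auto.
        apply close_pcons; auto. rewrite Rminus_diag, Rabs_R0; lra. }
      assert (B2 : Rabs (H y (sel x) - G x) < e).
      { unfold G, H. apply Hdl2. apply inbox_pcons; auto. apply Rabs_le_iff, clamp_range; auto.
        apply inbox_pcons; auto. apply Rabs_le_iff, clamp_range; auto.
        apply close_pcons; auto. rewrite Rminus_diag, Rabs_R0; lra.
        intro i. rewrite Rabs_minus_sym. apply Hxy. }
      apply Rabs_def1; unfold Rabs in B1, B2; destruct Rcase_abs in B1; destruct Rcase_abs in B2; lra.
    + destruct (Hsel xs' Hxs'1) as [Hs1 Hs2].
      exists (pcons (sel xs') xs'). split.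
      * apply inbox_pcons; auto. apply Rabs_le_iff; auto.
      * intros y Hy. rewrite <- (pcons_eta n y).
        assert (Hyt : inbox R0 (ptl y)) by (intro i; apply Hy).
        assert (Hy1 : - R0 <= y Fin.F1 <= R0) by (apply Rabs_le_iff; apply Hy).
        assert (E1 : F (pcons (y Fin.F1) (ptl y)) = H (ptl y) (y Fin.F1)) by (unfold H; rewrite clamp_id; auto).
        assert (E2 : F (pcons (sel xs') xs') = G xs') by (unfold G, H; rewrite clamp_id; auto).
        rewrite E1, E2. destruct (Hsel (ptl y) Hyt) as [_ Hc].
        specialize (Hxs'2 (ptl y) Hyt). specialize (Hc (y Fin.F1) Hy1). unfold G in *. lra.
Qed.

Lemma deriv_left_min (G : R -> R) s0 c eta : eta > 0 -> derivable_pt_lim G s0 c ->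
  (forall s, s0 - eta < s <= s0 -> G s0 <= G s) -> c <= 0.
Proof.
  intros He Hd Hm. destruct (Rle_or_lt c 0) as [|Hc]; auto. exfalso.
  destruct (Hd c Hc) as [del Hdel].
  set (h := - Rmin del eta / 2).
  assert (Hmin1 : Rmin del eta <= del) by apply Rmin_l.
  assert (Hmin2 : Rmin del eta <= eta) by apply Rmin_r.
  assert (Hmin3 : 0 < Rmin del eta) by (apply Rmin_glb_lt; [apply cond_pos|lra]).
  assert (Hh : h < 0) by (unfold h; lra).
  specialize (Hdel h ltac:(lra) ltac:(rewrite Rabs_left; unfold h; lra)).
  assert (A : G s0 <= G (s0 + h)) by (apply Hm; unfold h; lra).
  assert (B : / h < 0) by (apply Rinv_lt_0_compat; lra).
  assert (C : (G (s0 + h) - G s0) / h <= 0) by (unfold Rdiv; nra).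
  apply Rabs_def2 in Hdel. lra.
Qed.

Lemma second_deriv_min (F F1 : R -> R) s0 c eta : eta > 0 ->
  (forall s, derivable_pt_lim F s (F1 s)) -> derivable_pt_lim F1 s0 c ->
  (forall s, Rabs (s - s0) < eta -> F s0 <= F s) -> 0 <= c.
Proof.
  intros He HF Hd Hm. destruct (Rle_or_lt 0 c) as [|Hc]; auto. exfalso.
  destruct (Hd (- c / 2) ltac:(lra)) as [del Hdel].
  set (h0 := Rmin del eta / 2).
  assert (Hmin1 : Rmin del eta <= del) by apply Rmin_l.
  assert (Hmin2 : Rmin del eta <= eta) by apply Rmin_r.
  assert (Hmin3 : 0 < Rmin del eta) by (apply Rmin_glb_lt; [apply cond_pos|lra]).
  assert (Hq : forall h, h <> 0 -> Rabs h <= h0 -> (F1 (s0 + h) - F1 s0) / h < c / 2).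
  { intros h Hh0 Hh. specialize (Hdel h Hh0 ltac:(unfold h0 in Hh; lra)).
    apply Rabs_def2 in Hdel. lra. }
  destruct (Rle_or_lt (F1 s0) 0) as [Hp|Hp].
  - destruct (MVT_cor2 F F1 s0 (s0 + h0)) as [xi [E Hxi]]. unfold h0; lra.
    intros; apply HF.
    specialize (Hq (xi - s0) ltac:(lra) ltac:(rewrite Rabs_right; lra)).
    replace (s0 + (xi - s0)) with xi in Hq by ring.
    assert (B : 0 < / (xi - s0)) by (apply Rinv_0_lt_compat; lra).
    assert (F1 xi - F1 s0 < 0).
    { assert (Hc2 : (F1 xi - F1 s0) / (xi - s0) < 0) by lra.
      unfold Rdiv in Hc2. destruct (Rle_or_lt 0 (F1 xi - F1 s0)); auto. nra. }
    assert (F s0 <= F (s0 + h0)) by (apply Hm; rewrite Rabs_right; unfold h0 in *; lra).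
    nra.
  - destruct (MVT_cor2 F F1 (s0 - h0) s0) as [xi [E Hxi]]. unfold h0; lra.
    intros; apply HF.
    specialize (Hq (xi - s0) ltac:(lra) ltac:(rewrite Rabs_left; lra)).
    replace (s0 + (xi - s0)) with xi in Hq by ring.
    assert (B : / (xi - s0) < 0) by (apply Rinv_lt_0_compat; lra).
    assert (0 < F1 xi - F1 s0).
    { assert (Hc2 : (F1 xi - F1 s0) / (xi - s0) < 0) by lra.
      unfold Rdiv in Hc2. destruct (Rle_or_lt (F1 xi - F1 s0) 0); auto. nra. }
    assert (F s0 <= F (s0 - h0)) by (apply Hm; rewrite Rabs_left; unfold h0 in *; lra).
    nra.
Qed.

Lemma unif_bound n (w : pt n -> R -> R) T : 0 <= T ->
  (forall t, 0 <= t -> exists M, forall x, Rabs (w x t) <= M) ->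
  (forall t0, 0 <= t0 -> forall e, e > 0 -> exists dl, dl > 0 /\
     forall t, 0 <= t -> Rabs (t - t0) < dl -> forall x, Rabs (w x t - w x t0) <= e) ->
  exists M, forall x t, 0 <= t <= T -> Rabs (w x t) <= M.
Proof.
  intros HT Hb Hc.
  set (E := fun t y => exists x, y = Rabs (w x t)).
  set (mm' := fun t => epsilon (inhabits 0) (fun m => is_lub (E t) m)).
  assert (Hmm' : forall t, 0 <= t -> is_lub (E t) (mm' t)).
  { intros t Ht. unfold mm'. apply epsilon_spec.
    destruct (Hb t Ht) as [M HM].
    destruct (completeness (E t)) as [m Hm].
    - exists M. intros y [x ->]. auto.
    - exists (Rabs (w (fun _ => 0) t)). exists (fun _ => 0). auto.
    - exists m; auto. }
  set (mm := fun t => mm' (Rmax 0 t)).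
  assert (Hmm : forall t, is_lub (E (Rmax 0 t)) (mm t)).
  { intro t. apply Hmm'. apply Rmax_l. }
  assert (Hup : forall x t, 0 <= t -> Rabs (w x t) <= mm t).
  { intros x t Ht. destruct (Hmm t) as [H1 _]. apply H1. rewrite Rmax_right by lra. exists x; auto. }
  assert (Hcont : forall c, 0 <= c <= T -> continuity_pt mm c).
  { intros c [Hc0 _]. unfold continuity_pt, continue_in, limit1_in, limit_in. simpl. unfold R_dist.
    intros e He. destruct (Hc c Hc0 (e/2) ltac:(lra)) as [dl [Hdl Hdl2]].
    exists dl. split; auto. intros t [_ Ht].
    assert (Hr : Rabs (Rmax 0 t - c) < dl).
    { unfold Rmax; destruct Rle_dec; unfold Rabs in *; repeat destruct Rcase_abs; lra. }
    assert (Hmc : mm c = mm' c) by (unfold mm; rewrite Rmax_right; auto).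
    assert (A : mm t <= mm c + e/2).
    { destruct (Hmm t) as [_ H2]. apply H2. intros y [x ->].
      specialize (Hdl2 (Rmax 0 t) (Rmax_l _ _) Hr x).
      specialize (Hup x c Hc0).
      unfold Rabs in *; repeat destruct Rcase_abs; lra. }
    assert (B : mm c <= mm t + e/2).
    { destruct (Hmm c) as [_ H2]. apply H2. intros y [x ->].
      specialize (Hdl2 (Rmax 0 t) (Rmax_l _ _) Hr x).
      assert (Rabs (w x (Rmax 0 t)) <= mm t).
      { destruct (Hmm t) as [H1 _]. apply H1. exists x; auto. }
      rewrite Rmax_right in * by auto.
      unfold Rabs in *; repeat destruct Rcase_abs; lra. }
    apply Rabs_def1; lra. }
  destruct (continuity_ab_maj mm 0 T HT Hcont) as [Mx [HM1 HM2]].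
  exists (mm Mx). intros x t Ht. eapply Rle_trans. apply Hup; lra. apply HM1; auto.
Qed.

Lemma dlim_lin (f g : R -> R) a b s l l' : derivable_pt_lim f s l -> derivable_pt_lim g s l' ->
  derivable_pt_lim (fun y => a * f y + b * g y) s (a * l + b * l').
Proof. intros Hf Hg.
  apply (derivable_pt_lim_plus (mult_real_fct a f) (mult_real_fct b g)).
  apply derivable_pt_lim_scal; auto. apply derivable_pt_lim_scal; auto. Qed.

Lemma dlim_sq c s : derivable_pt_lim (fun y => c + y * y) s (2 * s).
Proof. replace (2 * s) with (0 + (1 * id s + id s * 1)) by (unfold id; ring).
  apply (derivable_pt_lim_plus (fct_cte c) (id * id)%F). apply derivable_pt_lim_const.
  apply derivable_pt_lim_mult; apply derivable_pt_lim_id. Qed.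

Lemma dlim_lin1 c s : derivable_pt_lim (fun y => c * y) s c.
Proof. pose proof (derivable_pt_lim_scal id c s 1 (derivable_pt_lim_id s)) as H. rewrite Rmult_1_r in H. exact H. Qed.

Lemma dlim_exp lam t : derivable_pt_lim (fun s => exp (- lam * s)) t (exp (- lam * t) * (- lam)).
Proof. apply (derivable_pt_lim_comp (fun s => - lam * s) exp). apply dlim_lin1. apply derivable_pt_lim_exp. Qed.

Lemma exp_le1 a : a <= 0 -> exp a <= 1.
Proof. intro. destruct (Req_dec a 0). subst; rewrite exp_0; lra. rewrite <- exp_0. left; apply exp_increasing; lra. Qed.

Lemma N2_lip n (x y : pt n) R0 dl : 0 <= R0 -> inbox R0 x -> inbox R0 y -> close x y dl ->
  Rabs (N2 x - N2 y) <= INR n * (2 * R0 * dl).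
Proof. intros HR Hx Hy Hc.
  assert (H : forall i, - (2 * R0 * dl) <= x i * x i - y i * y i <= 2 * R0 * dl).
  { intro i. specialize (Hx i); specialize (Hy i); specialize (Hc i).
    apply Rabs_le_iff in Hx, Hy. apply Rabs_def2 in Hc. split; nra. }
  unfold N2. apply Rabs_le_iff.
  replace (sumFin n (fun i => x i * x i) - sumFin n (fun i => y i * y i)) with
    (sumFin n (fun i => x i * x i - y i * y i)).
  2:{ replace (fun i => x i * x i - y i * y i) with (fun i => x i * x i + (-1) * (y i * y i))
       by (apply functional_extensionality; intro; ring).
      rewrite sumFin_plus, sumFin_scal. ring. }
  split.
  - replace (- (INR n * (2 * R0 * dl))) with (sumFin n (fun _ => - (2 * R0 * dl))) by (rewrite sumFin_const; ring).
    apply sumFin_le. intro; apply H.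
  - rewrite <- sumFin_const. apply sumFin_le. intro; apply H.
Qed.

Lemma dlim_aff a c s : derivable_pt_lim (fun y => a + c * y) s c.
Proof. pose proof (derivable_pt_lim_plus (fct_cte a) (fun y => c * y) s 0 c (derivable_pt_lim_const a s) (dlim_lin1 c s)) as H.
  rewrite Rplus_0_l in H. exact H. Qed.

Lemma maxp n (d K : R) (w wt lap : pt n -> R -> R) (D1 D2 : Fin.t n -> pt n -> R -> R) :
  d > 0 ->
  (forall t, 0 <= t -> BUC (fun x => w x t)) ->
  (forall t0, 0 <= t0 -> forall e, e > 0 -> exists dl, dl > 0 /\
     forall t, 0 <= t -> Rabs (t - t0) < dl -> forall x, Rabs (w x t - w x t0) <= e) ->
  (forall x, 0 <= w x 0) ->
  (forall x t, 0 < t -> derivable_pt_lim (fun s => w x s) t (wt x t)) ->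
  (forall i x t, 0 < t -> derivable_pt_lim (fun s => w (upd x i s) t) (x i) (D1 i x t)) ->
  (forall i x t, 0 < t -> derivable_pt_lim (fun s => D1 i (upd x i s) t) (x i) (D2 i x t)) ->
  (forall x t, 0 < t -> lap x t = sumFin n (fun i => D2 i x t)) ->
  (forall x t, 0 < t -> w x t <= 0 -> K * w x t <= wt x t - d * lap x t) ->
  forall x t, 0 <= t -> 0 <= w x t.
Proof.
  intros Hd HB Hc H0 Hwt HD1 HD2 Hlap HK x0 T HT.
  apply Rnot_lt_le; intro Hneg.
  set (lam := Rmax K 0 + 1).
  assert (Hlam : 0 < lam /\ K <= lam) by (unfold lam; split; [pose proof (Rmax_r K 0)|pose proof (Rmax_l K 0)]; lra).
  set (ex := fun t => exp (- lam * t)).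
  assert (Hex : forall t, 0 <= t -> 0 < ex t <= 1).
  { intros t Ht. unfold ex. split. apply exp_pos. apply exp_le1. nra. }
  set (cc := 2 * d * INR n + 1).
  destruct (unif_bound n w T HT) as [M HM].
  { intros t Ht. destruct (HB t Ht) as [[M HM] _]. exists M; auto. }
  { auto. }
  assert (HM0 : 0 <= M) by (specialize (HM x0 T ltac:(lra)); pose proof (Rabs_pos (w x0 T)); lra).
  set (Psi := fun del x t => ex t * w x t + del * (N2 x + cc * t)).
  assert (Hz0 : ex T * w x0 T < 0) by (destruct (Hex T HT); nra).
  set (del := - (ex T * w x0 T) / (2 * (N2 x0 + cc * T + 1))).
  assert (HPhi0 : 0 <= N2 x0 + cc * T).
  { pose proof (N2_nonneg n x0). assert (0 <= INR n) by apply pos_INR.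
    assert (0 <= cc) by (unfold cc; assert (0 <= 2 * d * INR n) by (apply Rmult_le_pos; lra); lra).
    apply Rplus_le_le_0_compat; auto; apply Rmult_le_pos; lra. }
  assert (Hdel : 0 < del) by (unfold del; apply Rdiv_lt_0_compat; lra).
  assert (Hdel2 : del * (N2 x0 + cc * T) < - (ex T * w x0 T) / 2).
  { assert (E : del * (N2 x0 + cc * T) = (- (ex T * w x0 T) / 2) * ((N2 x0 + cc * T) / (N2 x0 + cc * T + 1)))
      by (unfold del; field; lra).
    assert ((N2 x0 + cc * T) / (N2 x0 + cc * T + 1) < 1).
    { apply Rmult_lt_reg_r with (N2 x0 + cc * T + 1). lra. unfold Rdiv. rewrite Rmult_assoc, Rinv_l; lra. }
    rewrite E. nra. }
  assert (HPsi0 : Psi del x0 T < 0) by (unfold Psi; lra).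
  assert (Hzlow : forall x t, 0 <= t <= T -> - M <= ex t * w x t).
  { intros x t Ht. destruct (Hex t ltac:(lra)). specialize (HM x t Ht). apply Rabs_le_iff in HM. nra. }
  set (R0 := (M + 1) / del + 1).
  assert (HR0 : 1 <= R0 /\ M < del * (R0 * R0)).
  { unfold R0. assert (0 <= (M+1)/del) by (left; apply Rdiv_lt_0_compat; lra).
    split. lra. assert (del * ((M+1)/del) = M + 1) by (field; lra). nra. }
  set (ct := fun t => Rmax 0 (Rmin T t)).
  assert (Hct : forall t, 0 <= ct t <= T) by (intro t; unfold ct, Rmax, Rmin; repeat destruct Rle_dec; lra).
  assert (Hctid : forall t, 0 <= t <= T -> ct t = t) by (intros t Ht; unfold ct, Rmax, Rmin; repeat destruct Rle_dec; lra).
  assert (Hctlip : forall t c, 0 <= c <= T -> Rabs (ct t - c) <= Rabs (t - c)).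
  { intros t c Hc'; unfold ct, Rmax, Rmin; repeat destruct Rle_dec; unfold Rabs; repeat destruct Rcase_abs; lra. }
  assert (Hevt : forall t, 0 <= t <= T -> exists xs, inbox R0 xs /\ forall y, inbox R0 y -> Psi del xs t <= Psi del y t).
  { intros t Ht. apply evt_box. lra.
    intros e He. destruct (HB t ltac:(lra)) as [_ Huc]. destruct (Huc (e/2) ltac:(lra)) as [dl1 [Hdl1 Hdl1']].
    set (dl2 := e / (4 * (del * INR n * R0 + 1))).
    assert (HnR : 0 <= del * INR n * R0) by (assert (0 <= INR n) by apply pos_INR; apply Rmult_le_pos; [apply Rmult_le_pos|]; lra).
    assert (Hdl2 : 0 < dl2) by (unfold dl2; apply Rdiv_lt_0_compat; lra).
    exists (Rmin dl1 dl2). split. apply Rmin_glb_lt; auto.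
    intros x y Hx Hy Hxy.
    assert (A : Rabs (w x t - w y t) < e / 2) by (apply Hdl1'; intro i; eapply Rlt_le_trans; [apply Hxy|apply Rmin_l]).
    assert (B : Rabs (N2 x - N2 y) <= INR n * (2 * R0 * Rmin dl1 dl2)) by (apply N2_lip; auto; lra).
    assert (B2 : del * (INR n * (2 * R0 * Rmin dl1 dl2)) < e / 2).
    { assert (Rmin dl1 dl2 <= dl2) by apply Rmin_r.
      assert (del * (INR n * (2 * R0 * dl2)) < e / 2).
      { unfold dl2. replace (del * (INR n * (2 * R0 * (e / (4 * (del * INR n * R0 + 1))))))
          with (e / 2 * ((del * INR n * R0) / (del * INR n * R0 + 1))) by (field; lra).
        assert ((del * INR n * R0) / (del * INR n * R0 + 1) < 1).
        { apply Rmult_lt_reg_r with (del * INR n * R0 + 1). lra. unfold Rdiv. rewrite Rmult_assoc, Rinv_l; lra. }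
        nra. }
      assert (0 <= Rmin dl1 dl2) by (left; apply Rmin_glb_lt; auto). nra. }
    destruct (Hex t ltac:(lra)).
    unfold Psi. apply Rabs_def2 in A. apply Rabs_le_iff in B.
    apply Rabs_def1; nra. }
  assert (Hexc : forall c e, e > 0 -> exists dl, dl > 0 /\ forall t, Rabs (t - c) < dl -> Rabs (ex t - ex c) < e).
  { intros c e He. assert (Hcont : continuity (fun t => exp (- lam * t))) by reg.
    specialize (Hcont c). unfold continuity_pt, continue_in, limit1_in, limit_in in Hcont. simpl in Hcont. unfold R_dist in Hcont.
    destruct (Hcont e He) as [dl [Hdl Hdl']]. exists dl. split; auto. intros t Ht.
    destruct (Req_dec t c) as [->|Hne]. unfold Rminus; rewrite Rplus_opp_r, Rabs_R0; lra.
    apply Hdl'. repeat split; try exact I; auto; intro; apply Hne; auto. }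
  assert (Hpc : forall c, 0 <= c <= T -> forall e, e > 0 -> exists dl, dl > 0 /\
     forall t, 0 <= t <= T -> Rabs (t - c) < dl -> forall x, Rabs (Psi del x t - Psi del x c) < e).
  { intros c Hc0 e He.
    destruct (Hc c ltac:(lra) (e/3) ltac:(lra)) as [dl1 [Hdl1 Hdl1']].
    destruct (Hexc c (e / (3 * (M + 1))) ltac:(apply Rdiv_lt_0_compat; lra)) as [dl2 [Hdl2 Hdl2']].
    set (dl3 := e / (3 * (del * cc + 1))).
    assert (Hcc : 1 <= cc) by (unfold cc; assert (0 <= 2 * d * INR n) by (apply Rmult_le_pos; [lra|apply pos_INR]); lra).
    assert (Hdl3 : 0 < dl3) by (unfold dl3; apply Rdiv_lt_0_compat; nra).
    exists (Rmin dl1 (Rmin dl2 dl3)). split. repeat apply Rmin_glb_lt; auto.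
    intros t Ht Htc x.
    assert (Ht1 : Rabs (t - c) < dl1) by (eapply Rlt_le_trans; [apply Htc|apply Rmin_l]).
    assert (Ht2 : Rabs (t - c) < dl2) by (eapply Rlt_le_trans; [apply Htc|]; eapply Rle_trans; [apply Rmin_r|apply Rmin_l]).
    assert (Ht3 : Rabs (t - c) < dl3) by (eapply Rlt_le_trans; [apply Htc|]; eapply Rle_trans; [apply Rmin_r|apply Rmin_r]).
    specialize (Hdl1' t ltac:(lra) Ht1 x). specialize (Hdl2' t Ht2).
    destruct (Hex t ltac:(lra)) as [He1 He2].
    assert (A1 : Rabs (ex t * (w x t - w x c)) <= e / 3).
    { rewrite Rabs_mult, Rabs_right by lra. apply Rle_trans with (1 * Rabs (w x t - w x c)).
      apply Rmult_le_compat_r. apply Rabs_pos. lra. lra. }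
    assert (A2 : Rabs ((ex t - ex c) * w x c) < e / 3).
    { rewrite Rabs_mult. specialize (HM x c Hc0).
      apply Rle_lt_trans with (e / (3 * (M + 1)) * M).
      apply Rmult_le_compat; try apply Rabs_pos; lra.
      replace (e / (3 * (M + 1)) * M) with (e / 3 * (M / (M + 1))) by (field; lra).
      assert (M / (M + 1) < 1).
      { apply Rmult_lt_reg_r with (M + 1). lra. unfold Rdiv. rewrite Rmult_assoc, Rinv_l; lra. }
      nra. }
    assert (A3 : Rabs (del * cc * (t - c)) < e / 3).
    { rewrite Rabs_mult, (Rabs_right (del * cc)) by nra.
      apply Rlt_le_trans with (del * cc * dl3). apply Rmult_lt_compat_l; nra.
      unfold dl3. replace (del * cc * (e / (3 * (del * cc + 1)))) with (e / 3 * (del * cc / (del * cc + 1))) by (field; nra).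
      assert (del * cc / (del * cc + 1) <= 1).
      { apply Rmult_le_reg_r with (del * cc + 1). nra. unfold Rdiv. rewrite Rmult_assoc, Rinv_l; nra. }
      nra. }
    replace (Psi del x t - Psi del x c) with (ex t * (w x t - w x c) + (ex t - ex c) * w x c + del * cc * (t - c))
      by (unfold Psi; ring).
    apply Rabs_def2 in A2. apply Rabs_def2 in A3. apply Rabs_le_iff in A1. apply Rabs_def1; lra. }
  set (X := fun t => epsilon (inhabits x0) (fun xs => inbox R0 xs /\ forall y, inbox R0 y -> Psi del xs (ct t) <= Psi del y (ct t))).
  assert (HX : forall t, inbox R0 (X t) /\ forall y, inbox R0 y -> Psi del (X t) (ct t) <= Psi del y (ct t)).
  { intro t. unfold X. apply epsilon_spec. apply Hevt. apply Hct. }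
  set (m := fun t => Psi del (X t) (ct t)).
  assert (Hmc : forall c, 0 <= c <= T -> continuity_pt m c).
  { intros c Hc0. unfold continuity_pt, continue_in, limit1_in, limit_in. simpl. unfold R_dist.
    intros e He. destruct (Hpc c Hc0 e He) as [dl [Hdl Hdl']]. exists dl. split; auto.
    intros t [_ Ht]. assert (Hr : Rabs (ct t - c) < dl) by (eapply Rle_lt_trans; [apply Hctlip; auto|auto]).
    pose proof (Hdl' (ct t) (Hct t) Hr (X c)) as B1. pose proof (Hdl' (ct t) (Hct t) Hr (X t)) as B2.
    destruct (HX t) as [HXt1 HXt2]. destruct (HX c) as [HXc1 HXc2].
    specialize (HXt2 (X c) HXc1). specialize (HXc2 (X t) HXt1).
    rewrite (Hctid c Hc0) in HXc2.
    unfold m. rewrite (Hctid c Hc0).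
    apply Rabs_def2 in B1. apply Rabs_def2 in B2. apply Rabs_def1; lra. }
  destruct (continuity_ab_min m 0 T HT Hmc) as [ts [Hts2 Hts1]].
  set (xs := X ts).
  assert (Hglob : forall y t, inbox R0 y -> 0 <= t <= T -> Psi del xs ts <= Psi del y t).
  { intros y t Hy Ht. pose proof (Hts2 t Ht) as Hm2. unfold m in Hm2. rewrite (Hctid ts Hts1), (Hctid t Ht) in Hm2.
    destruct (HX t) as [_ H2]. specialize (H2 y Hy). rewrite (Hctid t Ht) in H2. unfold xs. lra. }
  assert (Hx0 : inbox R0 x0).
  { intro i. pose proof (N2_ge n x0 i). pose proof (N2_nonneg n x0).
    assert (0 <= cc * T) by (apply Rmult_le_pos; [|lra]; unfold cc; assert (0 <= 2 * d * INR n) by (apply Rmult_le_pos; [lra|apply pos_INR]); lra).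
    assert (Hl := Hzlow x0 T ltac:(lra)).
    assert (0 <= del * (cc * T)) by (apply Rmult_le_pos; lra).
    assert (del * N2 x0 < M) by (unfold Psi in HPsi0; cbv beta in HPsi0; lra).
    assert (x0 i * x0 i < R0 * R0) by nra.
    apply Rabs_le_iff. split; nra. }
  assert (HPs : Psi del xs ts < 0) by (pose proof (Hglob x0 T Hx0 ltac:(lra)); lra).
  destruct (HX ts) as [Hxsb _]. fold xs in Hxsb.
  assert (Hts0 : 0 < ts).
  { destruct Hts1 as [[Hp|Hp] _]; auto. exfalso. subst ts. unfold Psi in HPs; cbv beta in HPs.
    unfold ex in HPs. rewrite Rmult_0_r, exp_0 in HPs. pose proof (H0 xs). pose proof (N2_nonneg n xs).
    assert (0 <= del * (N2 xs + cc * 0)) by (apply Rmult_le_pos; lra). lra. }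
  assert (Hccpos : 0 <= cc) by (unfold cc; assert (0 <= 2 * d * INR n) by (apply Rmult_le_pos; [lra|apply pos_INR]); lra).
  assert (Hwneg : w xs ts < 0).
  { unfold Psi in HPs; cbv beta in HPs. pose proof (N2_nonneg n xs). destruct (Hex ts ltac:(lra)).
    assert (0 <= del * (N2 xs + cc * ts)) by (apply Rmult_le_pos; [lra|apply Rplus_le_le_0_compat; [lra|apply Rmult_le_pos; lra]]).
    destruct (Rlt_or_le (w xs ts) 0); auto. exfalso.
    assert (0 <= ex ts * w xs ts) by (apply Rmult_le_pos; lra). lra. }
  assert (Hint : forall i, Rabs (xs i) < R0).
  { intro i. destruct (Hxsb i) as [Hl|Heq]; auto. exfalso.
    pose proof (N2_ge n xs i). assert (xs i * xs i = R0 * R0).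
    { rewrite <- Heq. unfold Rabs; destruct Rcase_abs; ring. }
    pose proof (Hzlow xs ts ltac:(lra)). unfold Psi in HPs; cbv beta in HPs.
    assert (0 <= del * (cc * ts)) by (apply Rmult_le_pos; [lra|apply Rmult_le_pos; lra]).
    assert (del * (R0 * R0) <= del * N2 xs) by (apply Rmult_le_compat_l; lra). lra. }
  assert (Hsp : forall i, 0 <= ex ts * D2 i xs ts + del * 2).
  { intro i. set (eta := R0 - Rabs (xs i)).
    apply (second_deriv_min (fun s => Psi del (upd xs i s) ts)
             (fun s => ex ts * D1 i (upd xs i s) ts + del * (2 * s)) (xs i) _ eta).
    - unfold eta. specialize (Hint i). lra.
    - intro s.
      replace (fun s0 => Psi del (upd xs i s0) ts) with
        (fun s0 => ex ts * (fun s' => w (upd xs i s') ts) s0 + del * ((N2 xs - xs i * xs i + cc * ts) + s0 * s0)).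
      2:{ apply functional_extensionality; intro s0. unfold Psi. cbv beta. rewrite N2_upd. ring. }
      apply dlim_lin. 2: apply dlim_sq.
      pose proof (HD1 i (upd xs i s) ts Hts0) as Hdd. rewrite upd_same in Hdd.
      replace (fun s0 => w (upd (upd xs i s) i s0) ts) with (fun s0 => w (upd xs i s0) ts) in Hdd; auto.
      apply functional_extensionality; intro s0. rewrite upd_upd. auto.
    - apply (dlim_lin (fun s => D1 i (upd xs i s) ts) (fun y => 2 * y)).
      apply HD2; auto. apply dlim_lin1.
    - intros s Hs. rewrite upd_id. apply Hglob; [|lra].
      intro j. destruct (Fin.eq_dec j i) as [->|Hne].
      + rewrite upd_same. unfold eta in Hs. unfold Rabs in *; repeat destruct Rcase_abs; lra.
      + rewrite upd_other; auto. }
  assert (Hsum : 0 <= ex ts * lap xs ts + del * 2 * INR n).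
  { rewrite (Hlap xs ts Hts0). rewrite <- sumFin_scal.
    replace (del * 2 * INR n) with (sumFin n (fun _ => del * 2)) by (rewrite sumFin_const; ring).
    rewrite <- sumFin_plus. apply sumFin_nonneg. auto. }
  assert (Htime : (exp (- lam * ts) * (- lam)) * w xs ts + ex ts * wt xs ts + del * cc <= 0).
  { pose proof (derivable_pt_lim_mult ex (fun s => w xs s) ts _ _ (dlim_exp lam ts) (Hwt xs ts Hts0)) as Hm.
    assert (Hl : derivable_pt_lim (fun s => N2 xs + cc * s) ts cc).
    { apply dlim_aff. }
    pose proof (dlim_lin _ _ 1 del ts _ _ Hm Hl) as Hdd.
    assert (Hle := deriv_left_min _ ts _ ts Hts0 Hdd).
    assert (Hle' : forall s, ts - ts < s <= ts ->
       1 * (ex * (fun s => w xs s))%F ts + del * (N2 xs + cc * ts) <=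
       1 * (ex * (fun s => w xs s))%F s + del * (N2 xs + cc * s)).
    { intros s Hs. unfold mult_fct. pose proof (Hglob xs s Hxsb ltac:(lra)) as Hg. unfold Psi in Hg. cbv beta in Hg. lra. }
    specialize (Hle Hle'). unfold ex in *. lra. }
  specialize (HK xs ts Hts0 ltac:(lra)).
  destruct (Hex ts ltac:(lra)) as [He1 He2].
  assert (f1 : ex ts * (K * w xs ts) <= ex ts * (wt xs ts - d * lap xs ts)) by (apply Rmult_le_compat_l; lra).
  assert (f2 : lam * w xs ts <= K * w xs ts) by nra.
  assert (f2' : ex ts * (lam * w xs ts) <= ex ts * (K * w xs ts)) by (apply Rmult_le_compat_l; lra).
  assert (f3 : d * (- (del * 2 * INR n)) <= d * (ex ts * lap xs ts)) by (apply Rmult_le_compat_l; lra).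
  assert (Eex : exp (- lam * ts) = ex ts) by reflexivity. rewrite Eex in Htime.
  unfold cc in Htime. nra.
Qed.

Lemma dlim_lin_1 (f g : R -> R) a s l l' : derivable_pt_lim f s l -> derivable_pt_lim g s l' ->
  derivable_pt_lim (fun y => a * f y + g y) s (a * l + l').
Proof. intros Hf Hg. pose proof (dlim_lin f g a 1 s l l' Hf Hg) as H.
  replace (fun y => a * f y + g y) with (fun y => a * f y + 1 * g y) by (apply functional_extensionality; intro; ring).
  replace (a * l + l') with (a * l + 1 * l') by ring. exact H. Qed.

Lemma affine_maxp n d K a (u ut lapu : pt n -> R -> R) (b db : R -> R) :
  d > 0 -> C_BUC u -> classical u ut lapu ->
  (forall t, 0 <= t -> derivable_pt_lim b t (db t)) ->
  (forall x, 0 <= a * u x 0 + b 0) ->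
  (forall x t, 0 < t -> a * u x t + b t <= 0 ->
     K * (a * u x t + b t) <= a * ut x t + db t - d * (a * lapu x t)) ->
  forall x t, 0 <= t -> 0 <= a * u x t + b t.
Proof.
  intros Hd [HB Hc] [_ [_ [Hut [D1 [D2 [_ [HD1 [HD2 Hlap]]]]]]]] Hb H0 HK.
  assert (Hbc : forall t0, 0 <= t0 -> forall e, e > 0 -> exists dl, dl > 0 /\ forall t, Rabs (t - t0) < dl -> Rabs (b t - b t0) < e).
  { intros t0 Ht0 e He. pose proof (derivable_continuous_pt b t0 (exist _ (db t0) (Hb t0 Ht0))) as Hcb.
    unfold continuity_pt, continue_in, limit1_in, limit_in in Hcb. simpl in Hcb. unfold R_dist in Hcb.
    destruct (Hcb e He) as [dl [Hdl Hdl']]. exists dl. split; auto. intros t Ht.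
    destruct (Req_dec t t0) as [->|Hne]. unfold Rminus; rewrite Rplus_opp_r, Rabs_R0; lra.
    apply Hdl'. repeat split; try exact I; auto; intro; apply Hne; auto. }
  apply (maxp n d K (fun x t => a * u x t + b t) (fun x t => a * ut x t + db t) (fun x t => a * lapu x t)
           (fun i x t => a * D1 i x t) (fun i x t => a * D2 i x t)); auto.
  - intros t Ht. destruct (HB t Ht) as [[M HM] Huc]. split.
    + exists (Rabs a * M + Rabs (b t)). intro x. eapply Rle_trans. apply Rabs_triang.
      rewrite Rabs_mult. apply Rplus_le_compat_r. apply Rmult_le_compat_l. apply Rabs_pos. auto.
    + intros e He. destruct (Huc (e / (Rabs a + 1))) as [dl [Hdl Hdl']].
      { apply Rdiv_lt_0_compat; auto. pose proof (Rabs_pos a); lra. }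
      exists dl. split; auto. intros x y Hxy. specialize (Hdl' x y Hxy).
      replace (a * u x t + b t - (a * u y t + b t)) with (a * (u x t - u y t)) by ring.
      rewrite Rabs_mult. pose proof (Rabs_pos a).
      apply Rle_lt_trans with (Rabs a * (e / (Rabs a + 1))).
      apply Rmult_le_compat_l; lra.
      replace (Rabs a * (e / (Rabs a + 1))) with (e * (Rabs a / (Rabs a + 1))) by (field; lra).
      assert (Rabs a / (Rabs a + 1) < 1).
      { apply Rmult_lt_reg_r with (Rabs a + 1). lra. unfold Rdiv. rewrite Rmult_assoc, Rinv_l; lra. }
      nra.
  - intros t0 Ht0 e He. pose proof (Rabs_pos a) as Ha.
    destruct (Hc t0 Ht0 (e / (2 * (Rabs a + 1)))) as [dl1 [Hdl1 Hdl1']]. apply Rdiv_lt_0_compat; lra.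
    destruct (Hbc t0 Ht0 (e / 2)) as [dl2 [Hdl2 Hdl2']]. lra.
    exists (Rmin dl1 dl2). split. apply Rmin_glb_lt; auto.
    intros t Ht Htt x.
    specialize (Hdl1' t Ht ltac:(eapply Rlt_le_trans; [apply Htt|apply Rmin_l]) x).
    specialize (Hdl2' t ltac:(eapply Rlt_le_trans; [apply Htt|apply Rmin_r])).
    replace (a * u x t + b t - (a * u x t0 + b t0)) with (a * (u x t - u x t0) + (b t - b t0)) by ring.
    eapply Rle_trans. apply Rabs_triang. rewrite Rabs_mult.
    assert (Rabs a * Rabs (u x t - u x t0) <= e / 2).
    { apply Rle_trans with (Rabs a * (e / (2 * (Rabs a + 1)))). apply Rmult_le_compat_l; lra.
      replace (Rabs a * (e / (2 * (Rabs a + 1)))) with (e / 2 * (Rabs a / (Rabs a + 1))) by (field; lra).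
      assert (Rabs a / (Rabs a + 1) <= 1).
      { apply Rmult_le_reg_r with (Rabs a + 1). lra. unfold Rdiv. rewrite Rmult_assoc, Rinv_l; lra. }
      nra. }
    lra.
  - intros x t Ht. apply dlim_lin_1. apply Hut; auto. apply Hb; lra.
  - intros i x t Ht. replace (a * D1 i x t) with (a * D1 i x t + 0) by ring.
    apply (dlim_lin_1 (fun s => u (upd x i s) t) (fct_cte (b t))). apply HD1; auto. apply derivable_pt_lim_const.
  - intros i x t Ht. apply (derivable_pt_lim_scal (fun s => D1 i (upd x i s) t)). apply HD2; auto.
  - intros x t Ht. rewrite Hlap; auto. rewrite sumFin_scal. auto.
Qed.

Lemma dtau t : 0 <= t -> derivable_pt_lim (fun s => s / (1 + s)) t ((1 - t / (1 + t)) ^ 2).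
Proof. intro Ht.
  pose proof (derivable_pt_lim_div id (fun s => 1 + 1 * s) t 1 1 (derivable_pt_lim_id t)
    (dlim_aff 1 1 t) ltac:(lra)) as H.
  replace ((1 - t / (1 + t)) ^ 2) with ((1 * (1 + 1 * t) - 1 * id t) / (1 + 1 * t)²)
    by (unfold id, Rsqr; field; lra).
  replace (fun s => s / (1 + s)) with (div_fct id (fun s => 1 + 1 * s)). exact H.
  apply functional_extensionality; intro s. unfold div_fct, id. replace (1 + 1 * s) with (1 + s) by ring. reflexivity. Qed.

Lemma dtaupow (c0 k : R) (m : nat) t : 0 <= t ->
  derivable_pt_lim (fun s => c0 + k * (s / (1 + s)) ^ (S m)) t
    (k * (INR (S m) * (t / (1 + t)) ^ m * (1 - t / (1 + t)) ^ 2)).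
Proof. intro Ht.
  pose proof (derivable_pt_lim_comp (fun s => s / (1 + s)) (fun y => y ^ (S m)) t _ _ (dtau t Ht)
     (derivable_pt_lim_pow (t / (1 + t)) (S m))) as H.
  replace (k * (INR (S m) * (t / (1 + t)) ^ m * (1 - t / (1 + t)) ^ 2)) with
    (0 + k * (INR (S m) * (t / (1 + t)) ^ Init.Nat.pred (S m) * (1 - t / (1 + t)) ^ 2)) by (simpl; ring).
  apply (derivable_pt_lim_plus (fct_cte c0) (fun s => k * (s / (1 + s)) ^ S m)).
  apply derivable_pt_lim_const. apply (derivable_pt_lim_scal (fun s => (s / (1 + s)) ^ S m)). exact H.
Qed.

Lemma tau_facts t : 0 <= t -> 0 <= t / (1 + t) < 1 /\ (0 < t -> 0 < t / (1 + t)).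
Proof. intro Ht. assert (0 < / (1 + t)) by (apply Rinv_0_lt_compat; lra).
  split. split. unfold Rdiv; nra.
  apply Rmult_lt_reg_r with (1 + t). lra. unfold Rdiv. rewrite Rmult_assoc, Rinv_l; lra.
  intro. unfold Rdiv; nra. Qed.

Lemma tau0 m : (0 / (1 + 0)) ^ (S m) = 0.
Proof. unfold Rdiv. rewrite Rmult_0_l. simpl. ring. Qed.

Lemma sq01 a : 0 <= a < 1 -> 0 <= (1 - a) * (1 - a) <= 1.
Proof. intro. split; nra. Qed.
Lemma prod01 a b : 0 <= a -> 0 <= b <= 1 -> 0 <= a * b <= a.
Proof. intros. split; nra. Qed.

Theorem theorem1 (n : nat) (eps h d q ubar : R)
  (heps : 0 < eps) (hh : 0 < h) (hd : 0 < d) (hq0 : 0 < q) (hq1 : q < 1)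
  (hub : q < ubar < 1) (hroot : g_BZ eps h q ubar = 0)
  (u0 v0 : pt n -> R) (hu0 : BUC u0) (hv0 : BUC v0)
  (hS0 : forall x, (q < u0 x < ubar) /\ (q < v0 x < ubar))
  (u v : pt n -> R -> R) (hsol : BZ_solution n eps h d q u0 v0 u v) :
  forall x t, 0 < t -> (q < u x t < ubar) /\ (q < v x t < ubar).
Proof.
  destruct hsol as [HCu [HCv [Hu0 [Hv0 [Hnn [ut [vt [lapu [lapv [Hclu [Hclv [Heu Hev]]]]]]]]]]]].
  assert (Hie : 0 < / eps) by (apply Rinv_0_lt_compat; lra).
  assert (A1 : forall x t, 0 <= t -> q <= u x t).
  { intros x t Ht.
    pose proof (affine_maxp n 1 0 1 u ut lapu (fun _ => - q) (fun _ => 0) ltac:(lra) HCu Hclu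
      ltac:(intros; apply derivable_pt_lim_const)) as H.
    assert (0 <= 1 * u x t + - q); [|lra]. apply H; auto.
    - intro y. rewrite Hu0. destruct (hS0 y). lra.
    - intros y s Hs Hw. rewrite Heu by auto. destruct (Hnn y s ltac:(lra)) as [Hu Hv].
      set (U := u y s) in *. set (V := v y s) in *.
      assert (Hr : 0 < / (U + q)) by (apply Rinv_0_lt_compat; lra).
      unfold Rdiv. assert (0 <= / eps * U * (1 - U)) by (apply Rmult_le_pos; [apply Rmult_le_pos|]; lra).
      assert (h * V * (U - q) * / (U + q) <= 0).
      { assert (0 <= h * V) by (apply Rmult_le_pos; lra).
        assert (h * V * (U - q) <= 0) by nra. nra. }
      lra. }
  assert (A2 : forall x t, 0 <= t -> q <= v x t).
  { intros x t Ht.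
    pose proof (affine_maxp n d (-1) 1 v vt lapv (fun _ => - q) (fun _ => 0) hd HCv Hclv
      ltac:(intros; apply derivable_pt_lim_const)) as H.
    assert (0 <= 1 * v x t + - q); [|lra]. apply H; auto.
    - intro y. rewrite Hv0. destruct (hS0 y). lra.
    - intros y s Hs Hw. rewrite Hev by auto. pose proof (A1 y s ltac:(lra)). lra. }
  assert (A3 : forall x t, 0 <= t -> u x t <= ubar).
  { intros x t Ht.
    pose proof (affine_maxp n 1 (2 / (q * eps)) (-1) u ut lapu (fun _ => ubar) (fun _ => 0) ltac:(lra) HCu Hclu
      ltac:(intros; apply derivable_pt_lim_const)) as H.
    assert (0 <= -1 * u x t + ubar); [|lra]. apply H; auto.
    - intro y. rewrite Hu0. destruct (hS0 y). lra.
    - intros y s Hs Hw. rewrite Heu by auto. pose proof (A2 y s ltac:(lra)) as Hv.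
      set (U := u y s) in *. set (V := v y s) in *.
      set (F := / eps * U * (1 - U) - h * V * (U - q) / (U + q)).
      assert (Hgoal : 2 / (q * eps) * (ubar - U) <= - F).
      { set (Q := -(U*U + U*ubar + ubar*ubar) + (1-q)*(U+ubar) + q - eps*h*q).
        assert (E : U*(1-U)*(U+q) - eps*h*q*(U-q) - (U-ubar)*Q = g_BZ eps h q ubar) by (unfold g_BZ, Q; ring).
        rewrite hroot in E.
        assert (p1 : 0 <= q*(U*U + U*ubar + ubar*ubar)) by (apply Rmult_le_pos; nra).
        assert (p2 : 0 <= (1 - q*(1-q))*(U+ubar)) by (apply Rmult_le_pos; nra).
        assert (p3 : 0 <= eps*h*q*q) by (repeat apply Rmult_le_pos; lra).
        assert (p4 : q*q <= q) by nra.
        assert (H2 : 0 <= 2*(U+q) - q*Q) by (unfold Q; lra).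
        assert (H3 : 0 <= (U - ubar) * (2*(U+q) - q*Q)) by (apply Rmult_le_pos; lra).
        assert (H4 : eps*h*q*(U-q) <= eps*h*V*(U-q)).
        { assert (0 <= (V - q) * (U - q)) by (apply Rmult_le_pos; lra).
          assert (0 <= eps * h) by (apply Rmult_le_pos; lra). nra. }
        assert (Hp : 0 < q * eps * (U + q)) by (apply Rmult_lt_0_compat; [apply Rmult_lt_0_compat|]; lra).
        apply Rmult_le_reg_r with (q * eps * (U + q)); auto.
        assert (Hm : 2 / (q * eps) * (ubar - U) * (q * eps * (U + q)) = 2 * (ubar - U) * (U + q)) by (field; lra).
        assert (Hn : - F * (q * eps * (U + q)) = q * (- (U * (1 - U) * (U + q)) + eps * h * V * (U - q)))
          by (unfold F; field; lra).
        rewrite Hm, Hn. nra. }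
      unfold F in Hgoal. lra. }
  assert (A4 : forall x t, 0 <= t -> v x t <= ubar).
  { intros x t Ht.
    pose proof (affine_maxp n d (-1) (-1) v vt lapv (fun _ => ubar) (fun _ => 0) hd HCv Hclv
      ltac:(intros; apply derivable_pt_lim_const)) as H.
    assert (0 <= -1 * v x t + ubar); [|lra]. apply H; auto.
    - intro y. rewrite Hv0. destruct (hS0 y). lra.
    - intros y s Hs Hw. rewrite Hev by auto. pose proof (A3 y s ltac:(lra)). lra. }
  assert (Hub1 : 0 < 1 - ubar) by lra.
  set (c := 2 * q * q * (1 - ubar) / (eps * (h + 2))).
  assert (Hc : 0 < c) by (unfold c; apply Rdiv_lt_0_compat; [repeat apply Rmult_lt_0_compat|apply Rmult_lt_0_compat]; lra).
  assert (Hceq : c * (eps * (h + 2)) = 2 * q * q * (1 - ubar)) by (unfold c; field; lra).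
  assert (B1 : forall x t, 0 <= t -> q + c * (t / (1 + t)) <= u x t).
  { intros x t Ht.
    pose proof (affine_maxp n 1 0 1 u ut lapu (fun s => - q + (- c) * (s / (1 + s)) ^ 1)
      (fun s => - c * (INR 1 * (s / (1 + s)) ^ 0 * (1 - s / (1 + s)) ^ 2)) ltac:(lra) HCu Hclu
      ltac:(intros; apply dtaupow; auto)) as H.
    assert (0 <= 1 * u x t + (- q + - c * (t / (1 + t)) ^ 1)); [|simpl in *; lra]. apply H; auto.
    - intro y. rewrite Hu0, tau0. destruct (hS0 y). lra.
    - intros y s Hs Hw. rewrite Heu by auto.
      pose proof (A1 y s ltac:(lra)). pose proof (A2 y s ltac:(lra)). pose proof (A3 y s ltac:(lra)). pose proof (A4 y s ltac:(lra)).
      destruct (tau_facts s ltac:(lra)) as [[Ht1 Ht2] _].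
      set (tau := s / (1 + s)) in *.
      set (U := u y s) in *. set (V := v y s) in *.
      set (F := / eps * U * (1 - U) - h * V * (U - q) / (U + q)).
      assert (Hw' : U <= q + c * tau) by (simpl in Hw; lra).
      assert (HF : c <= F).
      { assert (Hp : 0 < eps * (U + q)) by (apply Rmult_lt_0_compat; lra).
        apply Rmult_le_reg_r with (eps * (U + q)); auto.
        assert (Hn : F * (eps * (U + q)) = U * (1 - U) * (U + q) - eps * h * V * (U - q)) by (unfold F; field; lra).
        rewrite Hn.
        assert (q1 : q * (1 - ubar) <= U * (1 - U)) by nra.
        assert (q2 : q * (1 - ubar) * (2 * q) <= U * (1 - U) * (U + q)) by (apply Rmult_le_compat; nra).
        assert (q3 : eps * h * V * (U - q) <= eps * h * (c * tau)).
        { assert (0 <= eps * h) by (apply Rmult_le_pos; lra).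
          assert (V * (U - q) <= 1 * (c * tau)) by (apply Rmult_le_compat; nra).
          replace (eps * h * V * (U - q)) with (eps * h * (V * (U - q))) by ring.
          apply Rmult_le_compat_l; lra. }
        assert (q4 : c * tau <= c) by nra.
        assert (q5 : c * (eps * (U + q)) <= c * (eps * 2)) by (apply Rmult_le_compat_l; [lra|]; apply Rmult_le_compat_l; lra).
        assert (q6 : eps * h * (c * tau) <= eps * h * c) by (apply Rmult_le_compat_l; [apply Rmult_le_pos|]; lra).
        nra. }
      assert (Hd1 : - c * (INR 1 * tau ^ 0 * (1 - tau) ^ 2) >= - c).
      { simpl. assert (0 <= (1 - tau) * (1 - tau) <= 1) by (split; nra). nra. }
      unfold F in HF. simpl in Hd1 |- *. clearbody tau U V. clear F. lra. }
  set (k := c / 3).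
  assert (Hk : 0 < k) by (unfold k; lra).
  assert (B2 : forall x t, 0 <= t -> q + k * (t / (1 + t)) ^ 2 <= v x t).
  { intros x t Ht.
    pose proof (affine_maxp n d (-1) 1 v vt lapv (fun s => - q + (- k) * (s / (1 + s)) ^ 2)
      (fun s => - k * (INR 2 * (s / (1 + s)) ^ 1 * (1 - s / (1 + s)) ^ 2)) hd HCv Hclv
      ltac:(intros; apply dtaupow; auto)) as H.
    assert (0 <= 1 * v x t + (- q + - k * (t / (1 + t)) ^ 2)); [|lra]. apply H; auto.
    - intro y. rewrite Hv0, tau0. destruct (hS0 y). lra.
    - intros y s Hs Hw. rewrite Hev by auto.
      pose proof (B1 y s ltac:(lra)).
      destruct (tau_facts s ltac:(lra)) as [[Ht1 Ht2] _].
      set (tau := s / (1 + s)) in *. simpl in *. clearbody tau. clear H.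
      assert (0 <= tau * ((1 - tau) * (1 - tau)) <= tau) by (apply prod01; [lra|apply sq01; lra]).
      assert (tau * tau <= tau) by (apply prod01; lra).
      assert (k * (tau * tau) <= k * tau) by (apply Rmult_le_compat_l; lra).
      assert (k * (tau * ((1 - tau) * (1 - tau))) <= k * tau) by (apply Rmult_le_compat_l; lra).
      assert (c = 3 * k) by (unfold k; lra).
      clearbody k c. subst c. lra. }
  set (C := (3 + eps * h * q) / (2 * q * eps)).
  assert (HC : 0 < C) by (unfold C; apply Rdiv_lt_0_compat; [|repeat apply Rmult_lt_0_compat]; try lra;
    assert (0 < eps * h * q) by (repeat apply Rmult_lt_0_compat; lra); lra).
  set (m2 := h * k * c / (2 * (C + 4))).
  assert (Hm2 : 0 < m2) by (unfold m2; apply Rdiv_lt_0_compat; [apply Rmult_lt_0_compat; [apply Rmult_lt_0_compat|]|]; lra).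
  assert (B3 : forall x t, 0 <= t -> u x t <= ubar - m2 * (t / (1 + t)) ^ 4).
  { intros x t Ht.
    pose proof (affine_maxp n 1 (- C) (-1) u ut lapu (fun s => ubar + (- m2) * (s / (1 + s)) ^ 4)
      (fun s => - m2 * (INR 4 * (s / (1 + s)) ^ 3 * (1 - s / (1 + s)) ^ 2)) ltac:(lra) HCu Hclu
      ltac:(intros; apply dtaupow; auto)) as H.
    assert (0 <= -1 * u x t + (ubar + - m2 * (t / (1 + t)) ^ 4)); [|lra]. apply H; auto.
    - intro y. rewrite Hu0, tau0. destruct (hS0 y). lra.
    - intros y s Hs Hw. rewrite Heu by auto.
      pose proof (B1 y s ltac:(lra)). pose proof (B2 y s ltac:(lra)).
      pose proof (A3 y s ltac:(lra)). pose proof (A4 y s ltac:(lra)).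
      destruct (tau_facts s ltac:(lra)) as [[Ht1 Ht2] _].
      set (tau := s / (1 + s)) in *.
      set (U := u y s) in *. set (V := v y s) in *. clearbody tau U V. clear H.
      assert (Hct : 0 <= c * tau) by (apply Rmult_le_pos; lra).
      assert (HUq : q <= U) by lra.
      set (F := / eps * U * (1 - U) - h * V * (U - q) / (U + q)).
      set (t3 := tau * tau * tau).
      assert (Ht3 : 0 <= t3) by (unfold t3; repeat apply Rmult_le_pos; lra).
      assert (HF : - C * (ubar - U) + m2 * t3 * (C * tau + 4 * ((1 - tau) * (1 - tau))) <= - F).
      { assert (Hp : 0 < eps * (U + q)) by (apply Rmult_lt_0_compat; lra).
        apply Rmult_le_reg_r with (eps * (U + q)); auto.
        assert (Hn : - F * (eps * (U + q)) = - (U * (1 - U) * (U + q)) + eps * h * V * (U - q)) by (unfold F; field; lra).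
        rewrite Hn.
        set (Q := -(U*U + U*ubar + ubar*ubar) + (1-q)*(U+ubar) + q - eps*h*q).
        assert (E : U*(1-U)*(U+q) - eps*h*q*(U-q) - (U-ubar)*Q = g_BZ eps h q ubar) by (unfold g_BZ, Q; ring).
        rewrite hroot in E.
        assert (HQ : - (3 + eps * h * q) <= Q).
        { unfold Q. assert (0 <= (1 - q) * (U + ubar)) by (apply Rmult_le_pos; lra).
          assert (U * U <= 1) by nra. assert (U * ubar <= 1) by nra. assert (ubar * ubar <= 1) by nra. lra. }
        assert (HQ2 : - (3 + eps * h * q) * (ubar - U) <= Q * (ubar - U)) by (apply Rmult_le_compat_r; lra).
        assert (Hv1 : eps * h * (q + k * (tau * tau)) * (U - q) <= eps * h * V * (U - q)).
        { assert (0 <= eps * h) by (apply Rmult_le_pos; lra).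
          assert ((q + k * (tau * tau)) * (U - q) <= V * (U - q)) by (apply Rmult_le_compat_r; simpl in *; lra).
          replace (eps * h * V * (U - q)) with (eps * h * (V * (U - q))) by ring.
          replace (eps * h * (q + k * (tau * tau)) * (U - q)) with (eps * h * ((q + k * (tau * tau)) * (U - q))) by ring.
          apply Rmult_le_compat_l; lra. }
        assert (Hv2 : eps * h * k * t3 * c <= eps * h * k * (tau * tau) * (U - q)).
        { assert (0 <= eps * h * k * (tau * tau)) by (apply Rmult_le_pos; [apply Rmult_le_pos; [apply Rmult_le_pos|]|apply Rmult_le_pos]; lra).
          replace (eps * h * k * t3 * c) with (eps * h * k * (tau * tau) * (c * tau)) by (unfold t3; ring).
          apply Rmult_le_compat_l; auto. simpl in *; lra. }
        assert (Hs1 : - C * (ubar - U) * (eps * (U + q)) <= - (3 + eps * h * q) * (ubar - U)).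
        { assert (Ce : C * (2 * q * eps) = 3 + eps * h * q) by (unfold C; field; lra).
          assert (0 <= C * (ubar - U)) by (apply Rmult_le_pos; lra).
          assert (C * (ubar - U) * (2 * q * eps) <= C * (ubar - U) * (eps * (U + q))) by (apply Rmult_le_compat_l; nra).
          nra. }
        assert (Hs2 : m2 * t3 * (C * tau + 4 * ((1 - tau) * (1 - tau))) * (eps * (U + q)) <= eps * h * k * t3 * c).
        { assert (A : C * tau + 4 * ((1 - tau) * (1 - tau)) <= C + 4) by nra.
          assert (A0 : 0 <= C * tau + 4 * ((1 - tau) * (1 - tau))) by nra.
          assert (B : eps * (U + q) <= 2 * eps) by nra.
          assert (Me : m2 * (C + 4) * (2 * eps) = eps * h * k * c) by (unfold m2; field; lra).
          assert (0 <= m2 * t3) by (apply Rmult_le_pos; lra).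
          assert (X1 : m2 * t3 * (C * tau + 4 * ((1 - tau) * (1 - tau))) <= m2 * t3 * (C + 4)) by (apply Rmult_le_compat_l; lra).
          assert (X2 : m2 * t3 * (C * tau + 4 * ((1 - tau) * (1 - tau))) * (eps * (U + q)) <= m2 * t3 * (C + 4) * (2 * eps))
            by (apply Rmult_le_compat; try lra; apply Rmult_le_pos; lra).
          nra. }
        replace ((- C * (ubar - U) + m2 * t3 * (C * tau + 4 * ((1 - tau) * (1 - tau)))) * (eps * (U + q)))
          with (- C * (ubar - U) * (eps * (U + q)) + m2 * t3 * (C * tau + 4 * ((1 - tau) * (1 - tau))) * (eps * (U + q))) by ring.
        clearbody Q. lra. }
      unfold F in HF. simpl in Hw |- *. unfold t3 in HF. clear F t3 Ht3. clearbody C m2 k c.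
      lra. }
  set (m3 := m2 / 6).
  assert (Hm3 : 0 < m3) by (unfold m3; lra).
  assert (B4 : forall x t, 0 <= t -> v x t <= ubar - m3 * (t / (1 + t)) ^ 5).
  { intros x t Ht.
    pose proof (affine_maxp n d (-1) (-1) v vt lapv (fun s => ubar + (- m3) * (s / (1 + s)) ^ 5)
      (fun s => - m3 * (INR 5 * (s / (1 + s)) ^ 4 * (1 - s / (1 + s)) ^ 2)) hd HCv Hclv
      ltac:(intros; apply dtaupow; auto)) as H.
    assert (0 <= -1 * v x t + (ubar + - m3 * (t / (1 + t)) ^ 5)); [|lra]. apply H; auto.
    - intro y. rewrite Hv0, tau0. destruct (hS0 y). lra.
    - intros y s Hs Hw. rewrite Hev by auto.
      pose proof (B3 y s ltac:(lra)).
      destruct (tau_facts s ltac:(lra)) as [[Ht1 Ht2] _].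
      set (tau := s / (1 + s)) in *. clearbody tau. clear H.
      set (t4 := tau ^ 4) in *.
      assert (Ht4 : 0 <= t4) by (unfold t4; apply pow_le; lra).
      assert (E5 : tau ^ 5 = t4 * tau) by (unfold t4; ring).
      assert (E3 : tau ^ 4 = t4) by reflexivity.
      assert (A1' : t4 * tau <= t4) by (pose proof (prod01 t4 tau Ht4 ltac:(lra)); lra).
      assert (A2' : t4 * ((1 - tau) * (1 - tau)) <= t4) by (pose proof (prod01 t4 ((1 - tau) * (1 - tau)) Ht4 ltac:(apply sq01; lra)); lra).
      assert (A3' : m3 * (t4 * tau) <= m3 * t4) by (apply Rmult_le_compat_l; lra).
      assert (A4' : m3 * (t4 * ((1 - tau) * (1 - tau))) <= m3 * t4) by (apply Rmult_le_compat_l; lra).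
      assert (Em : m2 = 6 * m3) by (unfold m3; lra).
      assert (I5 : INR 5 = 5) by (simpl; ring).
      rewrite E5 in *. rewrite I5.
      replace ((1 - tau) ^ 2) with ((1 - tau) * (1 - tau)) by ring.
      clearbody m3 m2. subst m2. clearbody t4. lra. }
  intros x t Ht.
  destruct (tau_facts t ltac:(lra)) as [[Ht1 Ht2] Ht3]. specialize (Ht3 Ht).
  pose proof (B1 x t ltac:(lra)). pose proof (B2 x t ltac:(lra)).
  pose proof (B3 x t ltac:(lra)). pose proof (B4 x t ltac:(lra)).
  set (tau := t / (1 + t)) in *. clearbody tau.
  assert (0 < c * tau) by (apply Rmult_lt_0_compat; lra).
  assert (0 < k * tau ^ 2) by (apply Rmult_lt_0_compat; [lra|apply pow_lt; lra]).
  assert (0 < m2 * tau ^ 4) by (apply Rmult_lt_0_compat; [lra|apply pow_lt; lra]).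
  assert (0 < m3 * tau ^ 5) by (apply Rmult_lt_0_compat; [lra|apply pow_lt; lra]).
  lra.
Qed.
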